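(* Let $\mathcal{X}$ be a finite alphabet with $|\mathcal{X}|=q$, $P_0,P_1$ probability mass functions on $\mathcal{X}$ with the same support $\mathcal{X}$, $\varepsilon>0$, $n>1$, $k^\star\in(1,n]$, and $\mathcal{D}=(x_1,\dots,x_n)$ with independent entries, $x_1,\dots,x_{k^\star-1}\sim P_0$, $x_{k^\star},\dots,x_n\sim P_1$. Let the Offline RR-CPD estimator privatize each $x_i$ by randomized response $W^r$ to $y_i$, set $Q_j(y)=\sum_xP_j(x)W^r(y|x)$, and output $\hat k\in\arg\max_{k\in[n]}\sum_{i=k}^n\log\frac{Q_1(y_i)}{Q_0(y_i)}$. Then for any $\alpha\in[n]$ the estimator is $(\alpha,\beta_r)$-accurate with $$\beta_r\le2\min\Big\{\frac{t_r(1-t_r^M)}{1-t_r};\ \Big(1-\frac{C_r}{2}\Big)^{\alpha/2}\Big\},$$ where $t_r=\exp(-\alpha C_r^2/s_r^2)$, $M=\lfloor\frac{n-1}{\alpha}\rfloor$, $s_r=\min\{2\varepsilon;\tanh(\varepsilon/2)s\}$, $C_r=2\big(\frac{e^\varepsilon-1}{e^\varepsilon+q-1}\big)^2d^2_{\mathrm{TV}}(P_0,P_1)$ and $s=\max_x\log\frac{P_1(x)}{P_0(x)}-\min_x\log\frac{P_1(x)}{P_0(x)}$.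
   Context: Randomized response: $W^r(y|x)=\frac{e^\varepsilon}{e^\varepsilon+q-1}$ if $y=x$ and $\frac{1}{e^\varepsilon+q-1}$ otherwise. $(\alpha,\beta)$-accurate means $\mathbb{P}\{\hat k\notin[k^\star-\alpha,k^\star+\alpha]\}=\beta$. $d_{\mathrm{TV}}(P_0,P_1)=\frac12\sum_x|P_0(x)-P_1(x)|$; $\tanh(\varepsilon/2)=\frac{e^\varepsilon-1}{e^\varepsilon+1}$. *)

(* Defs.v *)
From mathcomp Require Import all_boot all_order all_algebra.
From mathcomp Require Import all_classical all_reals.
From mathcomp Require Import sequences realfun exp.
Set Implicit Arguments. Unset Strict Implicit. Unset Printing Implicit Defensive.
Import Order.TTheory GRing.Theory Num.Theory.
Local Open Scope ring_scope.

Section RRCPD.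
Variables (R : realType) (X : finType).

Definition qX : nat := #|X|.

Definition Wr (eps : R) (y x : X) : R :=
  if y == x then expR eps / (expR eps + qX%:R - 1)
  else 1 / (expR eps + qX%:R - 1).

Definition Qout (eps : R) (P : X -> R) (y : X) : R :=
  \sum_(x : X) P x * Wr eps y x.

Definition dTV (P0 P1 : X -> R) : R := 2^-1 * \sum_(x : X) `|P0 x - P1 x|.

Definition tanh_half (eps : R) : R := (expR eps - 1) / (expR eps + 1).

(* max / min of a function over the nonempty finite type X (x0 only seeds the fold) *)
Definition fmax (x0 : X) (f : X -> R) : R := \big[Num.max/f x0]_(x : X) f x.
Definition fmin (x0 : X) (f : X -> R) : R := \big[Num.min/f x0]_(x : X) f x.

Definition llr (P0 P1 : X -> R) (x : X) : R := ln (P1 x / P0 x).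
Definition s_range (x0 : X) (P0 P1 : X -> R) : R :=
  fmax x0 (llr P0 P1) - fmin x0 (llr P0 P1).

Definition s_r (eps : R) (x0 : X) (P0 P1 : X -> R) : R :=
  Num.min (2 * eps) (tanh_half eps * s_range x0 P0 P1).

Definition C_r (eps : R) (P0 P1 : X -> R) : R :=
  2 * ((expR eps - 1) / (expR eps + qX%:R - 1)) ^+ 2 * (dTV P0 P1) ^+ 2.

Definition t_r (eps : R) (x0 : X) (P0 P1 : X -> R) (alpha : nat) : R :=
  expR (- (alpha%:R * C_r eps P0 P1 ^+ 2 / s_r eps x0 P0 P1 ^+ 2)).

Definition beta_bound (eps : R) (x0 : X) (P0 P1 : X -> R) (n alpha : nat) : R :=
  let t := t_r eps x0 P0 P1 alpha in
  let M := (n.-1 %/ alpha)%N in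
  2 * Num.min (t * (1 - t ^+ M) / (1 - t))
              ((1 - C_r eps P0 P1 / 2) `^ (alpha%:R / 2)).

(* Sequences of length n: position i : 'I_n is the paper's index i+1. *)
Definition cusum (eps : R) (P0 P1 : X -> R) (n : nat) (y : {ffun 'I_n -> X})
  (k : nat) : R :=
  \sum_(i < n | (k <= i.+1)%N) ln (Qout eps P1 (y i) / Qout eps P0 (y i)).

Definition Pat (P0 P1 : X -> R) (kstar : nat) (n : nat) (i : 'I_n) : X -> R :=
  if (i.+1 < kstar)%N then P0 else P1.

Definition joint (eps : R) (P0 P1 : X -> R) (kstar n : nat)
  (x y : {ffun 'I_n -> X}) : R :=
  \prod_(i < n) (Pat P0 P1 kstar i (x i) * Wr eps (y i) (x i)).

Definition err_prob (eps : R) (P0 P1 : X -> R) (kstar n alpha : nat)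
  (khat : {ffun 'I_n -> X} -> nat) : R :=
  \sum_(x : {ffun 'I_n -> X})
   \sum_(y : {ffun 'I_n -> X} | (khat y + alpha < kstar)%N || (kstar + alpha < khat y)%N)
     joint eps P0 P1 kstar x y.

End RRCPD.

(* Main.v *)
Require Import Defs.
From mathcomp Require Import all_boot all_order all_algebra.
From mathcomp Require Import all_classical all_reals.
From mathcomp Require Import sequences realfun exp.
From mathcomp Require Import ring lra zify.
Import Order.TTheory GRing.Theory Num.Theory.
Local Open Scope ring_scope.
Set Implicit Arguments. Unset Strict Implicit. Unset Printing Implicit Defensive.


Section Indep.
Variables (R : realType) (I X : finType) (w : I -> X -> R).
Hypotheses (w_ge0 : forall i x, 0 <= w i x) (w_sum1 : forall i, \sum_x w i x = 1).

Definition Wt (y : {ffun I -> X}) : R := \prod_i w i (y i).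
Definition upd (y : {ffun I -> X}) (i : I) (z : X) : {ffun I -> X} :=
  [ffun j => if j == i then z else y j].

Lemma Wt_ge0 y : 0 <= Wt y.
Proof. by apply: prodr_ge0 => i _. Qed.

Lemma Wt_sum1 : \sum_y Wt y = 1.
Proof.
rewrite /Wt -(bigA_distr_bigA (fun i x => w i x)).
by apply: big1 => i _; rewrite w_sum1.
Qed.

Lemma indep i (h : {ffun I -> X} -> R) (phi : X -> R) :
  (forall y z, h (upd y i z) = h y) ->
  \sum_y Wt y * (h y * phi (y i)) =
  (\sum_y Wt y * h y) * (\sum_x w i x * phi x).
Proof.
move=> hinv.
pose G (y : {ffun I -> X}) := (\prod_(j | j != i) w j (y j)) * h y.
have WtE (y : {ffun I -> X}) : Wt y = w i (y i) * \prod_(j | j != i) w j (y j).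
  by rewrite /Wt (bigD1 i).
have Ginv y z : G (upd y i z) = G y.
  rewrite /G hinv; congr (_ * _); apply: eq_bigr => j /negbTE ji.
  by rewrite ffunE ji.
pose T (x : X) := \sum_(y : {ffun I -> X}) (y i == x)%:R * G y.
have TT x x' : T x = T x'.
  pose sw u := if u == x then x' else if u == x' then x else u.
  have swK : involutive sw.
    move=> u; rewrite /sw; case: (eqVneq u x) => [->|ux].
      by rewrite eqxx; case: (eqVneq x' x) => [->|_] //; rewrite eqxx.
    case: (eqVneq u x') => [->|ux']; first by rewrite eqxx.
    by rewrite (negbTE ux) (negbTE ux').
  pose sg (y : {ffun I -> X}) := upd y i (sw (y i)).
  have sgK : involutive sg.
    move=> y; apply/ffunP => j; rewrite /sg /upd !ffunE.
    by case: (eqVneq j i) => [->|//]; rewrite (eqxx i) swK.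
  rewrite /T (reindex_inj (inv_inj sgK)) /=; apply: eq_bigr => y _.
  rewrite /sg Ginv /upd ffunE (eqxx i); congr (_%:R * _).
  rewrite /sw; case: (eqVneq (y i) x) => [->|yx].
    by rewrite eq_sym.
  case: (eqVneq (y i) x') => [_|_]; [by rewrite eqxx | by rewrite (negbTE yx)].
have split (F : X -> R) : \sum_(y : {ffun I -> X}) F (y i) * G y = \sum_x F x * T x.
  transitivity (\sum_(y : {ffun I -> X}) \sum_x (y i == x)%:R * F x * G y).
    apply: eq_bigr => y _; rewrite -mulr_suml; congr (_ * _).
    rewrite (bigD1 (y i)) //= eqxx mul1r big1 ?addr0 // => x /negbTE.
    by rewrite eq_sym => ->; rewrite mul0r.
  rewrite exchange_big; apply: eq_bigr => x _; rewrite /T mulr_sumr.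
  by apply: eq_bigr => y _; ring.
transitivity (\sum_(y : {ffun I -> X}) (w i (y i) * phi (y i)) * G y).
  by apply: eq_bigr => y _; rewrite WtE /G; ring.
transitivity ((\sum_(y : {ffun I -> X}) w i (y i) * G y) * (\sum_x w i x * phi x)); last first.
  by congr (_ * _); apply: eq_bigr => y _; rewrite WtE /G; ring.
rewrite (split (fun u => w i u * phi u)) (split (w i)) mulrC mulr_suml.
apply: eq_bigr => u _.
transitivity ((w i u * phi u) * (T u * \sum_x w i x)).
  by rewrite w_sum1 mulr1.
rewrite mulr_sumr; congr (_ * _); apply: eq_bigr => x _; rewrite (TT u x); ring.
Qed.

End Indep.


Section Ville.
Variables (R : realType) (I X : finType) (w : I -> X -> R) (f : X -> R) (rho : R).
Variables (p : nat -> I) (N a : nat).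
Hypotheses (w_ge0 : forall i x, 0 <= w i x) (w_sum1 : forall i, \sum_x w i x = 1).
Hypotheses (rho_gt0 : 0 < rho) (rho_le1 : rho <= 1).
Hypothesis p_inj : forall j k, (j < N)%N -> (k < N)%N -> p j = p k -> j = k.
Hypothesis hmgf : forall j, (j < N)%N -> \sum_x w (p j) x * expR (f x / 2) <= rho.

Definition Ssum m (y : {ffun I -> X}) : R := \sum_(j < m) f (y (p j)).
Definition Zm m y : R := expR (Ssum m y / 2) / rho ^+ m.
Definition Dn m y : bool := all (fun k => (a <= k)%N ==> (Ssum k y < 0)) (iota 0 m).
Definition Vm M y : R := 1 + \sum_(m < M) (Dn m.+1 y)%:R * (Zm m.+1 y - Zm m y).
Definition Ev y : bool := has (fun m => (a <= m)%N && (0 <= Ssum m y)) (iota 0 N.+1).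

Lemma DnS m y : Dn m.+1 y = Dn m y && ((a <= m)%N ==> (Ssum m y < 0)).
Proof. by rewrite /Dn -addn1 iotaD all_cat /= andbT. Qed.

Lemma Zm_ge0 m y : 0 <= Zm m y.
Proof. by rewrite /Zm divr_ge0 ?expR_ge0 // exprn_ge0 // ltW. Qed.

Lemma rho_pow_gt0 m : 0 < rho ^+ m.
Proof. exact: exprn_gt0. Qed.

Lemma Vm_inv M y : (Dn M y -> Vm M y = Zm M y) /\ (~~ Dn M y -> 1 <= rho ^+ a * Vm M y).
Proof.
elim: M => [|M [IH1 IH2]].
  split=> // _; rewrite /Vm /Zm /Ssum !big_ord0 mul0r expR0 expr0 divr1 addr0 //.
have VS : Vm M.+1 y = Vm M y + (Dn M.+1 y)%:R * (Zm M.+1 y - Zm M y).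
  by rewrite /Vm big_ord_recr /= addrA.
split.
  move=> D; rewrite VS D /=; move: D; rewrite DnS => /andP[/IH1 -> _]; ring.
move=> nD1; rewrite VS (negbTE nD1) mul0r addr0.
move: nD1; rewrite DnS negb_and => /orP[nD|]; first exact: IH2.
rewrite negb_imply => /andP[aM]; rewrite -leNgt => S0.
case D: (Dn M y); last by apply: IH2; rewrite D.
rewrite (IH1 D) /Zm.
have e1 : 1 <= expR (Ssum M y / 2) by rewrite -[X in X <= _]expR0 ler_expR divr_ge0.
have e2 : rho ^+ M <= rho ^+ a.
  move: aM; rewrite leq_eqVlt => /orP[/eqP -> //|/ltnW aM].
  rewrite -(subnKC aM) exprD; apply: ler_piMr; first by rewrite exprn_ge0 // ltW.
  by rewrite exprn_ile1 // ltW.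
rewrite mulrA ler_pdivlMr ?rho_pow_gt0 // mul1r.
by apply: (le_trans e2); apply: ler_peMr => //; rewrite exprn_ge0 // ltW.
Qed.

Lemma Vm_ge0 M y : 0 <= Vm M y.
Proof.
have [I1 I2] := Vm_inv M y.
case D: (Dn M y); first by rewrite I1 ?Zm_ge0.
have := I2 (negbT D); rewrite -(pmulr_rge0 _ (rho_pow_gt0 a)).
by apply: le_trans.
Qed.

Lemma one_le_Z M y : (a <= M)%N -> 0 <= Ssum M y -> 1 <= rho ^+ a * Zm M y.
Proof.
move=> aM S0; rewrite /Zm.
have e1 : 1 <= expR (Ssum M y / 2) by rewrite -[X in X <= _]expR0 ler_expR divr_ge0.
have e2 : rho ^+ M <= rho ^+ a.
  move: aM; rewrite leq_eqVlt => /orP[/eqP -> //|/ltnW aM].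
  rewrite -(subnKC aM) exprD; apply: ler_piMr; first by rewrite exprn_ge0 // ltW.
  by rewrite exprn_ile1 // ltW.
rewrite mulrA ler_pdivlMr ?rho_pow_gt0 // mul1r.
by apply: (le_trans e2); apply: ler_peMr => //; rewrite exprn_ge0 // ltW.
Qed.

Lemma Ev_le y : (Ev y)%:R <= rho ^+ a * Vm N y.
Proof.
case E: (Ev y); last by rewrite /= mulr_ge0 ?Vm_ge0 // exprn_ge0 // ltW.
move/hasP: E => [m]; rewrite mem_iota => /andP[_ mN] /andP[am Sm].
have [I1 I2] := Vm_inv N y.
case D: (Dn N y); last by apply: I2; rewrite D.
rewrite (I1 D) /=.
move: mN; rewrite add0n ltnS leq_eqVlt => /orP[/eqP mN|mN].
  by rewrite -mN; apply: one_le_Z.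
move: D => /allP /(_ m); rewrite mem_iota add0n mN am /= => /(_ isT).
by rewrite ltNge Sm.
Qed.

Lemma Ssum_upd m k y z : (m < N)%N -> (k <= m)%N -> Ssum k (upd y (p m) z) = Ssum k y.
Proof.
move=> mN km; apply: eq_bigr => j _; rewrite ffunE.
case: eqP => // /p_inj.
have jm : (j < m)%N := leq_trans (ltn_ord j) km.
move=> /(_ (ltn_trans jm mN) mN) e; by move: jm; rewrite e ltnn.
Qed.

Lemma EV : \sum_y Wt w y * Vm N y <= 1.
Proof.
rewrite /Vm; under eq_bigr do rewrite mulrDr mulr1 mulr_sumr.
rewrite big_split /= Wt_sum1 // exchange_big /=.
rewrite -[X in _ <= X]addr0 lerD2l; apply: sumr_le0 => m _.
have Zs y : Zm m.+1 y - Zm m y = Zm m y * (expR (f (y (p m)) / 2) / rho - 1).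
  rewrite /Zm /Ssum big_ord_recr /= mulrDl expRD exprSr.
  by field; rewrite !gt_eqF ?rho_pow_gt0.
rewrite (eq_bigr (fun y => Wt w y * ((Dn m.+1 y)%:R * Zm m y * (expR (f (y (p m)) / 2) / rho - 1)))); last by move=> y _; rewrite Zs !mulrA.
have hinv y z : (fun y => (Dn m.+1 y)%:R * Zm m y) (upd y (p m) z) =
                (fun y => (Dn m.+1 y)%:R * Zm m y) y.
  rewrite /= /Zm Ssum_upd // /Dn; congr (_%:R * _).
  congr (nat_of_bool _); apply: eq_in_all => k; rewrite mem_iota add0n ltnS => /andP[_ km].
  by rewrite Ssum_upd.
have E := indep w_sum1 (fun x => expR (f x / 2) / rho - 1) hinv; simpl in E; rewrite E.
apply: mulr_ge0_le0.
  apply: sumr_ge0 => y _; apply: mulr_ge0; first exact: Wt_ge0.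
  by apply: mulr_ge0; [case: (Dn _ _)| exact: Zm_ge0].
under eq_bigr do rewrite mulrBr mulr1 mulrA.
rewrite sumrB w_sum1 -mulr_suml subr_le0 ler_pdivrMr // mul1r.
exact: hmgf.
Qed.

Lemma ville : \sum_y Wt w y * (Ev y)%:R <= rho ^+ a.
Proof.
apply: (@le_trans _ _ (\sum_y rho ^+ a * (Wt w y * Vm N y))).
  apply: ler_sum => y _; rewrite mulrCA; apply: ler_wpM2l; first exact: Wt_ge0.
  exact: Ev_le.
rewrite -mulr_sumr; apply: ler_piMr; first by rewrite exprn_ge0 // ltW.
exact: EV.
Qed.

End Ville.


Lemma cauchy_schwarz (R : realType) (X : finType) (u a b : X -> R) :
  (forall x, 0 <= u x) ->
  (\sum_x u x * a x * b x) ^+ 2 <= (\sum_x u x * a x ^+ 2) * (\sum_x u x * b x ^+ 2).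
Proof.
move=> u0.
set A := \sum_x u x * a x ^+ 2; set B := \sum_x u x * b x ^+ 2.
set C := \sum_x u x * a x * b x.
have A0 : 0 <= A by apply: sumr_ge0 => x _; rewrite mulr_ge0 ?sqr_ge0.
have B0 : 0 <= B by apply: sumr_ge0 => x _; rewrite mulr_ge0 ?sqr_ge0.
have key t : 0 <= t ^+ 2 * A - 2 * t * C + B.
  have -> : t ^+ 2 * A - 2 * t * C + B = \sum_x u x * (t * a x - b x) ^+ 2.
    rewrite /A /B /C mulr_sumr mulr_sumr -sumrB -big_split /=.
    by apply: eq_bigr => x _; ring.
  by apply: sumr_ge0 => x _; rewrite mulr_ge0 ?sqr_ge0.
case: (eqVneq A 0) => [A00|An0].
  have ua x : u x * a x = 0.
    have := psumr_eq0P (P := predT) (F := fun x => u x * a x ^+ 2) _ A00 (i := x).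
    move=> /(_ (fun x _ => mulr_ge0 (u0 x) (sqr_ge0 _)) isT) /eqP.
    rewrite mulf_eq0 sqrf_eq0 => /orP[/eqP->|/eqP->]; by rewrite ?mul0r ?mulr0.
  have -> : C = 0 by rewrite /C big1 // => x _; rewrite ua mul0r.
  by rewrite expr0n /= mulr_ge0.
have Apos : 0 < A by rewrite lt_def An0 A0.
have := key (C / A).
have -> : (C / A) ^+ 2 * A - 2 * (C / A) * C + B = B - C ^+ 2 / A by field.
rewrite subr_ge0 ler_pdivrMr //.
by rewrite mulrC.
Qed.

Lemma sum_eq1 (R : realType) (X : finType) (y : X) (G : X -> R) :
  \sum_x (y == x)%:R * G x = G y.
Proof.
rewrite (bigD1 y) //= eqxx mul1r big1 ?addr0 // => x /negbTE.
by rewrite eq_sym => ->; rewrite mul0r.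
Qed.

Section Main.
Variables (R : realType) (X : finType) (x0 : X) (P0 P1 : X -> R) (eps : R).
Hypotheses (hP0pos : forall x, 0 < P0 x) (hP1pos : forall x, 0 < P1 x)
  (hP0sum : \sum_(x : X) P0 x = 1) (hP1sum : \sum_(x : X) P1 x = 1)
  (heps : 0 < eps).

Let E := expR eps.
Let D := E + (qX X)%:R - 1.

Lemma E_gt1 : 1 < E.
Proof. by rewrite /E expR_gt1. Qed.

Lemma q_ge1 : (1 <= qX X)%N.
Proof. by rewrite /qX; apply/card_gt0P; exists x0. Qed.

Lemma D_gt0 : 0 < D.
Proof.
have := E_gt1; have : 1 <= (qX X)%:R :> R by rewrite ler1n q_ge1.
rewrite /D; lra.
Qed.

Lemma Wr_eq (y x : X) : Wr eps y x = (1 + (y == x)%:R * (E - 1)) / D.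
Proof.
rewrite /Wr -/E -/D; case: (y == x) => /=; last by rewrite mul0r addr0.
by rewrite mul1r addrC subrK.
Qed.

Lemma Qout_eq (P : X -> R) : \sum_x P x = 1 -> forall y,
  Qout eps P y = (1 + P y * (E - 1)) / D.
Proof.
move=> hs y; rewrite /Qout.
rewrite (eq_bigr (fun x => P x / D + (y == x)%:R * (P x * (E - 1) / D))); last first.
  by move=> x _; rewrite Wr_eq; ring.
rewrite big_split /= -mulr_suml hs sum_eq1; ring.
Qed.

Lemma Q_gt0 (P : X -> R) : (forall x, 0 < P x) -> \sum_x P x = 1 -> forall y, 0 < Qout eps P y.
Proof.
move=> hp hs y; rewrite Qout_eq // divr_gt0 ?D_gt0 //.
have := hp y; have := E_gt1; nra.
Qed.

Lemma Q_sum1 (P : X -> R) : \sum_x P x = 1 -> \sum_y Qout eps P y = 1.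
Proof.
move=> hs; under eq_bigr do rewrite Qout_eq //.
rewrite -mulr_suml big_split /= -mulr_suml hs mul1r sumr_const.
rewrite /D /qX; have := D_gt0; rewrite /D /qX => Dp.
rewrite -[LHS]/((#|X|%:R + (E - 1)) / (E + #|X|%:R - 1)).
have -> : (#|X|%:R + (E - 1)) = (E + #|X|%:R - 1 : R) by ring.
by rewrite mulfV // gt_eqF.
Qed.

Definition Q0 := Qout eps P0.
Definition Q1 := Qout eps P1.
Definition lq (y : X) := ln (Q1 y / Q0 y).
Definition rho := \sum_y Q0 y * expR (lq y / 2).
Definition rr := (E - 1) / D.
Definition TVQ := 2^-1 * \sum_y `|Q0 y - Q1 y|.

Lemma Q0_gt0 (y : X) : 0 < Q0 y. Proof. exact: Q_gt0. Qed.
Lemma Q1_gt0 (y : X) : 0 < Q1 y. Proof. exact: Q_gt0. Qed.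

Lemma Qdiff (y : X) : Q1 y - Q0 y = rr * (P1 y - P0 y).
Proof. rewrite /Q1 /Q0 /rr !Qout_eq //; field; exact: lt0r_neq0 D_gt0. Qed.

Lemma rr_ge0 : 0 <= rr.
Proof. by apply: divr_ge0; [rewrite subr_ge0; apply: ltW; exact: E_gt1 | exact: ltW D_gt0]. Qed.

Lemma TVQ_eq : TVQ = rr * dTV P0 P1.
Proof.
rewrite /TVQ /dTV mulrCA; congr (_ * _); rewrite mulr_sumr; apply: eq_bigr => y _.
rewrite -normrN opprB Qdiff normrM ger0_norm ?rr_ge0 //.
by rewrite -normrN opprB.
Qed.

Lemma expl (y : X) : expR (lq y) = Q1 y / Q0 y.
Proof. by rewrite /lq lnK // posrE divr_gt0 ?Q0_gt0 ?Q1_gt0. Qed.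

Lemma rho_alt : \sum_y Q1 y * expR (- lq y / 2) = rho.
Proof.
apply: eq_bigr => y _.
have -> : Q1 y = Q0 y * expR (lq y).
  by rewrite expl mulrC divfK // gt_eqF // Q0_gt0.
rewrite -mulrA -expRD; congr (_ * expR _); by field.
Qed.

Lemma rho_gt0 : 0 < rho.
Proof.
rewrite /rho; rewrite (bigD1 x0) //=; apply: ltr_pwDl.
  by rewrite mulr_gt0 ?Q0_gt0 ?expR_gt0.
by apply: sumr_ge0 => y _; rewrite mulr_ge0 ?expR_ge0 // ltW // Q0_gt0.
Qed.

Lemma rho_sq : rho ^+ 2 <= 1 - TVQ ^+ 2.
Proof.
pose g y := expR (lq y / 2).
have g2 y : g y ^+ 2 = Q1 y / Q0 y by rewrite /g -expRM_natr -expl; congr expR; field.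
have Q1E y : Q1 y = Q0 y * g y ^+ 2 by rewrite g2 mulrC divfK // gt_eqF // Q0_gt0.
have g0 y : 0 <= g y by exact: expR_ge0.
have cs := @cauchy_schwarz _ _ Q0 (fun y => `|1 - g y|) (fun y => 1 + g y)
  (fun y => ltW (Q0_gt0 y)).
have e1 : \sum_y Q0 y * `|1 - g y| * (1 + g y) = 2 * TVQ.
  have h2 : (2:R) != 0 by rewrite pnatr_eq0.
  rewrite /TVQ mulrA mulfV // mul1r; apply eq_bigr => y _.
  rewrite Q1E.
  have -> : Q0 y - Q0 y * g y ^+ 2 = Q0 y * ((1 - g y) * (1 + g y)) by ring.
  rewrite normrM (ger0_norm (ltW (Q0_gt0 y))) normrM (ger0_norm (x := 1 + g y)).
    by rewrite mulrA.
  by rewrite addr_ge0.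
have sQ0 : \sum_y Q0 y = 1 by exact: Q_sum1.
have sQ1 : \sum_y Q0 y * g y ^+ 2 = 1.
  by rewrite -(Q_sum1 hP1sum); apply: eq_bigr => y _; rewrite -/(Q1 y) Q1E.
have e2 : \sum_y Q0 y * `|1 - g y| ^+ 2 = 2 - 2 * rho.
  transitivity (\sum_y (Q0 y - 2 * (Q0 y * g y) + Q0 y * g y ^+ 2)).
    by apply: eq_bigr => y _; rewrite real_normK ?num_real //; ring.
  rewrite !big_split /= sumrN sQ0 sQ1 -mulr_sumr /rho; ring.
have e3 : \sum_y Q0 y * (1 + g y) ^+ 2 = 2 + 2 * rho.
  transitivity (\sum_y (Q0 y + 2 * (Q0 y * g y) + Q0 y * g y ^+ 2)).
    by apply: eq_bigr => y _; ring.
  rewrite !big_split /= sQ0 sQ1 -mulr_sumr /rho; ring.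
rewrite e1 e2 e3 in cs.
nra.
Qed.

Lemma rho_le1 : rho <= 1.
Proof. have := rho_sq; have := rho_gt0; nra. Qed.

End Main.

Lemma poly_aux (R : realFieldType) (E z : R) : 0 < z -> z < 1 -> 1 <= E -> E * z^+2 <= 1 ->
  (2 - 2 * z) ^+ 2 < 2 ->
  2 * (E - 1) ^+ 2 <= (2 - 2 * z) ^+ 2 * (E + 1) ^+ 2.
Proof.
move=> z0 z1 E1 Ez e2.
set e := 2 - 2 * z.
set g := e ^+ 2 * (E + 1) ^+ 2 - 2 * (E - 1) ^+ 2.
set G := e ^+ 2 * (1 + z^+2) ^+ 2 - 2 * (1 - z^+2) ^+ 2.
have id : z^+2 * (1 - z^+2) * g = z^+2 * (1 - E * z^+2) * (4 * e^+2) + (E - 1) * G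
   + (2 - e^+2) * (E - 1) * (1 - E * z^+2) * (1 - z^+2).
  rewrite /g /G; ring.
have G0 : 0 <= G.
  have -> : G = 2 * (1 - z)^+2 * ((1 - z)^+2 + 2 * z^+2 + 2 * (z^+2)^+2) by rewrite /G /e; ring.
  apply: mulr_ge0; first by apply: mulr_ge0; [lra | exact: sqr_ge0].
  apply: addr_ge0; first apply: addr_ge0; try apply: mulr_ge0; rewrite ?sqr_ge0 //; lra.
have z2 : 0 < z^+2 by rewrite exprn_gt0.
have z2' : 0 < 1 - z^+2 by nra.
have rhs0 : 0 <= z^+2 * (1 - E * z^+2) * (4 * e^+2) + (E - 1) * G
   + (2 - e^+2) * (E - 1) * (1 - E * z^+2) * (1 - z^+2).
  have t1 : 0 <= z^+2 * (1 - E * z^+2) * (4 * e^+2).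
    by apply: mulr_ge0; [apply: mulr_ge0; lra | apply: mulr_ge0; [lra|exact: sqr_ge0]].
  have t2 : 0 <= (E - 1) * G by apply: mulr_ge0; lra.
  have t3 : 0 <= (2 - e^+2) * (E - 1) * (1 - E * z^+2) * (1 - z^+2).
    have e2' : e^+2 < 2 by [].
    by apply: mulr_ge0; [apply: mulr_ge0; [apply: mulr_ge0|]|]; lra.
  lra.
rewrite -subr_ge0 -/g.
rewrite -id in rhs0.
by rewrite (pmulr_rge0 _ (mulr_gt0 z2 z2')) in rhs0.
Qed.

Lemma th_bound (R : realType) (eps : R) : 0 < eps ->
  2 * ((expR eps - 1) / (expR eps + 1)) ^+ 2 <= eps ^+ 2.
Proof.
move=> e0; set E := expR eps.
have E1 : 1 < E by rewrite /E expR_gt1.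
have Ep : 0 < E + 1 by lra.
rewrite expr_div_n mulrA ler_pdivrMr ?exprn_gt0 //.
case: (lerP 2 (eps ^+ 2)) => h.
  have h1 : (E - 1) ^+ 2 <= (E + 1) ^+ 2 by nra.
  have h2 : 0 <= (E + 1) ^+ 2 by apply: sqr_ge0.
  nra.
have e2 : eps < 2 by nra.
set z := 1 - eps / 2.
have z0 : 0 < z by rewrite /z; lra.
have z1 : z < 1 by rewrite /z; lra.
have ez : z <= expR (- (eps / 2)).
  by have := expR_ge1Dx (- (eps / 2)); rewrite /z; lra.
have hEq : E * expR (- (eps / 2)) ^+ 2 = 1.
  rewrite /E -expRM_natr -expRD -[RHS]expR0; congr expR; by field.
have Ez : E * z ^+ 2 <= 1.
  rewrite -hEq; apply: ler_wpM2l; first lra.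
  by rewrite ler_sqr ?nnegrE ?expR_ge0 // ltW.
have epsE : eps = 2 - 2 * z by rewrite /z; field.
rewrite epsE; apply: poly_aux => //; first lra.
by rewrite -epsE.
Qed.

Lemma s_bound (R : realType) (X : finType) (x0 : X) (P0 P1 : X -> R) :
  (forall x, 0 < P0 x) -> (forall x, 0 < P1 x) ->
  \sum_x P0 x = 1 -> \sum_x P1 x = 1 ->
  3 * dTV P0 P1 <= s_range x0 P0 P1.
Proof.
move=> p0 p1 s0 s1.
set u := fmax x0 (llr P0 P1); set v := fmin x0 (llr P0 P1).
have hu x : llr P0 P1 x <= u by apply: le_bigmax.
have hv x : v <= llr P0 P1 x by apply: bigmin_le.
have sge0 : 0 <= u - v by have := hu x0; have := hv x0; lra.
set T := dTV P0 P1.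
pose A := [pred x | P0 x < P1 x].
set a := \sum_(x | A x) P1 x; set b := \sum_(x | ~~ A x) P0 x.
set a0 := \sum_(x | A x) P0 x; set b1 := \sum_(x | ~~ A x) P1 x.
have ha : a + b1 = 1 by rewrite -s1 [in RHS](bigID A).
have hb : a0 + b = 1 by rewrite -s0 [in RHS](bigID A).
have hT : T = a + b - 1.
  rewrite /T /dTV (bigID A) /=.
  have -> : \sum_(i | A i) `|P0 i - P1 i| = a - a0.
    rewrite /a /a0 -sumrB; apply: eq_bigr => x Ax.
    by rewrite -normrN opprB ger0_norm // subr_ge0 ltW.
  have -> : \sum_(i | ~~ A i) `|P0 i - P1 i| = b - b1.
    rewrite /b /b1 -sumrB; apply: eq_bigr => x Ax.
    by rewrite ger0_norm // subr_ge0 leNgt.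
  lra.
have llrE x : expR (llr P0 P1 x) = P1 x / P0 x.
  by rewrite /llr lnK // posrE divr_gt0.
have b1a : expR (- u) * a <= a0.
  rewrite /a /a0 mulr_sumr; apply: ler_sum => x _.
  have -> : P0 x = P1 x * expR (- llr P0 P1 x).
    by rewrite expRN llrE invf_div mulrC divfK // gt_eqF.
  by rewrite mulrC; apply: ler_wpM2l; [exact: ltW | rewrite ler_expR lerN2].
have b2b : expR v * b <= b1.
  rewrite /b /b1 mulr_sumr; apply: ler_sum => x _.
  have -> : P1 x = P0 x * expR (llr P0 P1 x).
    by rewrite llrE mulrC divfK // gt_eqF.
  by rewrite mulrC; apply: ler_wpM2l; [exact: ltW | rewrite ler_expR].
have a00 : 0 <= a0 by apply: sumr_ge0 => x _; apply: ltW.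
have b10 : 0 <= b1 by apply: sumr_ge0 => x _; apply: ltW.
have eu : 0 < expR (- u) := expR_gt0 _.
have ev : 0 < expR v := expR_gt0 _.
have T0 : 0 <= T by rewrite /T /dTV; apply: mulr_ge0; [rewrite invr_ge0 | apply: sumr_ge0 => x _].

case: (eqVneq T 0) => [->|Tn0]; first by rewrite mulr0.
have Tp : 0 < T by rewrite lt_def Tn0 T0.
have T1 : T <= 1 by lra.
have ap : 0 < a by nra.
have bp : 0 < b by nra.
set e := expR (- (u - v)).
have eE : e = expR (- u) * expR v by rewrite /e -expRD; congr expR; ring.
have e1 : e <= 1 by rewrite /e expR_le1; lra.
have key1 : e * (a * b) <= a * b - T.
  rewrite eE.
  have : (expR (- u) * a) * (expR v * b) <= (a - T) * (b - T).
    apply: ler_pM; try nra.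
  nra.
have key2 : e * (1 + T) ^+ 2 <= (1 - T) ^+ 2.
  have ab4 : 4 * (a * b) <= (1 + T) ^+ 2.
    have := sqr_ge0 (a - b); rewrite hT in hb ha *; nra.
  have hh : 0 <= (1 - e) * ((1 + T) ^+ 2 - 4 * (a * b)).
    by apply: mulr_ge0; lra.
  nra.
rewrite /s_range -/u -/v.
rewrite leNgt; apply/negP => hs.
have : expR (- (3 * T)) < e by rewrite /e ltr_expR; lra.
have q0 : 1 - 3 * T / 4 <= expR (- (3 * T / 4)).
  by have := expR_ge1Dx (- (3 * T / 4)); lra.
have q4 : expR (- (3 * T)) = expR (- (3 * T / 4)) ^+ 4.
  by rewrite -expRM_natr; congr expR; field.
rewrite q4 => he.
set qq := expR (- (3 * T / 4)) in q0 q4 he.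
have pp : 0 <= 1 - 3 * T / 4 by lra.
have pol : (1 - T) <= (1 - 3 * T / 4) ^+ 2 * (1 + T).
  rewrite -subr_ge0.
  have -> : (1 - 3 * T / 4) ^+ 2 * (1 + T) - (1 - T) = T / 16 * (9 * (T - 5/6) ^+ 2 + 7/4).
    by field.
  apply: mulr_ge0; first lra.
  have := sqr_ge0 (T - 5/6); lra.
set p := 1 - 3 * T / 4 in pp q0 pol.
have P2 : p ^+ 2 <= qq ^+ 2 by rewrite ler_sqr ?nnegrE //; lra.
have Q4 : qq ^+ 4 = (qq ^+ 2) ^+ 2 by rewrite -exprM.
rewrite Q4 in he.
have P4 : (p ^+ 2) ^+ 2 <= (qq ^+ 2) ^+ 2 by rewrite ler_sqr ?nnegrE ?sqr_ge0.
have T2 : 0 <= (1 + T) ^+ 2 by apply: sqr_ge0.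
have h1 : (1 - T) ^+ 2 <= (p ^+ 2 * (1 + T)) ^+ 2 by rewrite ler_sqr ?nnegrE; lra.
have h2 : (qq ^+ 2) ^+ 2 * (1 + T) ^+ 2 < e * (1 + T) ^+ 2.
  by rewrite ltr_pM2r // lt_def sqrf_eq0 T2; apply/andP; split => //; lra.
have h3 : (p ^+ 2 * (1 + T)) ^+ 2 = (p ^+ 2) ^+ 2 * (1 + T) ^+ 2 by rewrite exprMn.
have h4 : (p ^+ 2) ^+ 2 * (1 + T) ^+ 2 <= (qq ^+ 2) ^+ 2 * (1 + T) ^+ 2.
  by rewrite ler_pM2r // ?lt_def ?sqrf_eq0 ?T2 //; lra.
lra.
Qed.


Definition cus (R : realType) n (F : 'I_n -> R) (k : nat) : R :=
  \sum_(i < n | (k <= i.+1)%N) F i.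

Lemma val_ins n (i0 : 'I_n) k : (k < n)%N -> nat_of_ord (insubd i0 k) = k.
Proof. by move=> h; have := val_insubd i0 k; rewrite h. Qed.

Lemma cus_step (R : realType) n (i0 : 'I_n) (F : 'I_n -> R) c : (1 <= c <= n)%N ->
  cus F c = F (insubd i0 c.-1) + cus F c.+1.
Proof.
move=> hc; rewrite /cus (bigD1 (insubd i0 c.-1)) /=; last by rewrite val_ins; lia.
congr (_ + _); apply: eq_bigl => i.
rewrite -(inj_eq val_inj) /= val_ins; last by lia.
apply/idP/idP; [move=> /andP[h1 h2]; lia | move=> h; apply/andP; split; lia].
Qed.

Lemma cusL (R : realType) n (i0 : 'I_n) (F : 'I_n -> R) b m : (m < b)%N -> (b <= n)%N ->
  cus F (b - m)%N - cus F b = \sum_(j < m) F (insubd i0 (b.-2 - j)%N).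
Proof.
move=> + bn; elim: m => [|m IH] hm; first by rewrite subn0 subrr big_ord0.
rewrite big_ord_recr /= -IH; last by lia.
rewrite (cus_step i0 F (c := (b - m.+1)%N)); last by lia.
have -> : (b - m.+1).+1 = (b - m)%N by lia.
have -> : (b - m.+1).-1 = (b.-2 - m)%N by lia.
ring.
Qed.

Lemma cusR (R : realType) n (i0 : 'I_n) (F : 'I_n -> R) b m : (1 <= b)%N -> (b + m <= n)%N ->
  cus F b - cus F (b + m)%N = \sum_(j < m) F (insubd i0 (b.-1 + j)%N).
Proof.
move=> b1; elim: m => [|m IH] hm; first by rewrite addn0 subrr big_ord0.
rewrite big_ord_recr /= -IH; last by lia.
rewrite (cus_step i0 F (c := (b + m)%N)); last by lia.
have -> : (b + m).+1 = (b + m.+1)%N by lia.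
have -> : (b + m).-1 = (b.-1 + m)%N by lia.
ring.
Qed.

Lemma BleA (R : realType) (X : finType) (x0 : X) (P0 P1 : X -> R)
  (hP0pos : forall x, 0 < P0 x) (hP1pos : forall x, 0 < P1 x)
  (hP0sum : \sum_(x : X) P0 x = 1) (hP1sum : \sum_(x : X) P1 x = 1)
  (hdiff : exists x, P0 x != P1 x) (eps : R) (heps : 0 < eps)
  (alpha M : nat) (ha : (1 <= alpha)%N) (hM : (0 < M)%N)
  (hy : 0 < 1 - C_r eps P0 P1 / 2) :
  (1 - C_r eps P0 P1 / 2) `^ (alpha%:R / 2) <=
  t_r eps x0 P0 P1 alpha * (1 - t_r eps x0 P0 P1 alpha ^+ M) / (1 - t_r eps x0 P0 P1 alpha).
Proof.
set C := C_r eps P0 P1; set T := dTV P0 P1; set E := expR eps.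
have E1 : 1 < E by rewrite /E expR_gt1.
have q2 : (2 <= qX X)%N.
  case: hdiff => x hx; rewrite /qX; apply/card_gt1P.
  case: (boolP [exists y, y != x]) => [/existsP[y hyx]|/existsPn hall].
    by exists x, y; split => //; rewrite eq_sym.
  have one (P : X -> R) : \sum_z P z = P x.
    rewrite (bigD1 x) //= big1 ?addr0 // => z hz.
    by have := hall z; rewrite hz.
  by move: hx; rewrite -(one P0) -(one P1) hP0sum hP1sum eqxx.
have q2R : 2 <= (qX X)%:R :> R by rewrite (ler_nat R 2).
set r := (E - 1) / (E + (qX X)%:R - 1).
set th := (E - 1) / (E + 1).
have Dp : 0 < E + (qX X)%:R - 1 by lra.
have r0 : 0 < r by rewrite /r divr_gt0 //; lra.
have rth : r <= th.
  rewrite /r /th; apply: ler_wpM2l; first lra.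
  rewrite lef_pV2 ?posrE; lra.
have th0 : 0 <= th by rewrite /th divr_ge0 //; lra.
have thb : 2 * th ^+ 2 <= eps ^+ 2 by exact: th_bound.
have T0 : 0 < T.
  case: hdiff => x hx; rewrite /T /dTV; apply: mulr_gt0; first by rewrite invr_gt0.
  rewrite (bigD1 x) //=; apply: ltr_pwDl.
    by rewrite normr_gt0 subr_eq0.
  by apply: sumr_ge0 => z _.
have T1 : T <= 1.
  rewrite /T /dTV.
  have : \sum_x `|P0 x - P1 x| <= \sum_x (P0 x + P1 x).
    apply: ler_sum => x _; apply: le_trans (ler_normB _ _) _.
    by rewrite !ger0_norm // ltW.
  rewrite big_split /= hP0sum hP1sum => h; lra.
have CE : C = 2 * r ^+ 2 * T ^+ 2 by [].
have s3 : 3 * T <= s_range x0 P0 P1 by exact: s_bound.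
set s := s_range x0 P0 P1 in s3.
set sr := s_r eps x0 P0 P1.
have sr0 : 0 <= sr.
  rewrite /sr /s_r le_min; apply/andP; split; first lra.
  rewrite /tanh_half -/E -/th -/s; apply: mulr_ge0 => //; lra.
have rr2 : r ^+ 2 <= th ^+ 2 by rewrite ler_sqr ?nnegrE; lra.
have T2 : T ^+ 2 <= 1 by rewrite -(expr1n _ 2) ler_sqr ?nnegrE; lra.
have r2p : 0 <= r ^+ 2 by apply: sqr_ge0.
have T2p : 0 <= T ^+ 2 by apply: sqr_ge0.
have h1 : 4 * C <= (2 * eps) ^+ 2.
  have : r ^+ 2 * T ^+ 2 <= th ^+ 2.
    apply: le_trans (_ : r ^+ 2 * 1 <= _); last by rewrite mulr1.
    by apply: ler_wpM2l.
  rewrite CE; nra.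
have h2 : 4 * C <= (th * s) ^+ 2.
  have : r ^+ 2 * T ^+ 2 <= th ^+ 2 * T ^+ 2 by apply: ler_wpM2r.
  have : 9 * T ^+ 2 <= s ^+ 2.
    have -> : 9 * T ^+ 2 = (3 * T) ^+ 2 by ring.
    by rewrite ler_sqr ?nnegrE; lra.
  have th2 : 0 <= th ^+ 2 by apply: sqr_ge0.
  rewrite CE; nra.
have hsr : 4 * C <= sr ^+ 2.
  rewrite /sr /s_r /tanh_half -/E -/th -/s.
  case: (leP (2 * eps) (th * s)) => h.
    exact: h1.
  exact: h2.
have C0 : 0 < C by rewrite CE; apply: mulr_gt0; [apply: mulr_gt0|]; rewrite ?exprn_gt0.
have sr2 : 0 < sr ^+ 2 by lra.
set k := alpha%:R * C ^+ 2 / sr ^+ 2.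
have al : 1 <= alpha%:R :> R by rewrite ler1n.
have k0 : 0 < k by rewrite /k; apply: divr_gt0 => //; apply: mulr_gt0; [lra| rewrite exprn_gt0].
have kC : k <= alpha%:R * C / 4.
  rewrite /k ler_pdivrMr //.
  have : 0 <= alpha%:R * C * (sr ^+ 2 - 4 * C) by apply: mulr_ge0; [apply: mulr_ge0|]; lra.
  nra.
set t := t_r eps x0 P0 P1 alpha.
have tE : t = expR (- k) by [].
have t0 : 0 < t by rewrite tE expR_gt0.
have t1 : t < 1 by rewrite tE expR_lt1; lra.
apply: (@le_trans _ _ t).
  set y := 1 - C / 2 in hy *.
  rewrite /powR gt_eqF // tE ler_expR.
  have lny : ln y <= y - 1 by have := expR_ge1Dx (ln y); rewrite lnK ?posrE //; lra.
  have : alpha%:R / 2 * ln y <= alpha%:R / 2 * (y - 1).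
    by apply: ler_wpM2l => //; apply: divr_ge0; lra.
  rewrite /y; lra.
have tM : t ^+ M <= t.
  case: M hM => // M' _; rewrite exprS; apply: ler_piMr; first lra.
  by apply: exprn_ile1; lra.
rewrite ler_pdivlMr; last lra.
apply: ler_wpM2l; lra.
Qed.


Unset Implicit Arguments. Set Strict Implicit.

Theorem corollary5p7 (R : realType) (X : finType) (x0 : X)
  (P0 P1 : X -> R)
  (hP0pos : forall x, 0 < P0 x) (hP1pos : forall x, 0 < P1 x)
  (hP0sum : \sum_(x : X) P0 x = 1) (hP1sum : \sum_(x : X) P1 x = 1)
  (hdiff : exists x, P0 x != P1 x)
  (eps : R) (heps : 0 < eps)
  (n kstar : nat) (hn : (1 < n)%N) (hk : (1 < kstar <= n)%N)
  (khat : {ffun 'I_n -> X} -> nat)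
  (hkhat : forall y : {ffun 'I_n -> X},
      (1 <= khat y <= n)%N /\
      (forall k : nat, (1 <= k <= n)%N ->
         cusum eps P0 P1 y k <= cusum eps P0 P1 y (khat y)))
  (alpha : nat) (halpha : (1 <= alpha <= n)%N) :
  err_prob eps P0 P1 kstar alpha khat <= beta_bound eps x0 P0 P1 n alpha.
Proof.
pose i0 : 'I_n := Ordinal (ltn_trans (ltn0Sn 0) hn).
pose w := fun (i : 'I_n) => Qout eps (Pat P0 P1 kstar i).
have w_ge0 i x : 0 <= w i x.
  rewrite /w /Pat; case: ifP => _; apply: ltW; exact: (Q_gt0 x0 heps).
have w_sum1 i : \sum_x w i x = 1.
  rewrite /w /Pat; case: ifP => _; exact: (Q_sum1 x0 heps).
set rh := rho P0 P1 eps.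
have rh0 : 0 < rh := rho_gt0 x0 P1 hP0pos hP0sum heps.
have rh1 : rh <= 1 := rho_le1 x0 hP0pos hP1pos hP0sum hP1sum heps.
pose bad (y : {ffun 'I_n -> X}) := ((khat y + alpha < kstar)%N || (kstar + alpha < khat y)%N).
have err_eq : err_prob eps P0 P1 kstar alpha khat = \sum_(y | bad y) Wt w y.
  rewrite /err_prob exchange_big /=; apply: eq_bigr => y _.
  rewrite /joint -(bigA_distr_bigA (fun i z => Pat P0 P1 kstar i z * Wr eps (y i) z)) /Wt.
  by apply: eq_bigr => i _.
pose F (y : {ffun 'I_n -> X}) (i : 'I_n) := lq P0 P1 eps (y i).
have hcus y k : cusum eps P0 P1 y k = cus (F y) k by [].
pose pL := fun j : nat => insubd i0 (kstar.-2 - j)%N.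
pose NL := kstar.-1.
pose fL := lq P0 P1 eps.
have villeL : \sum_y Wt w y * (Ev fL pL NL alpha y)%:R <= rh ^+ alpha.
  apply: ville => //.
    move=> j k hj hk2 /(congr1 (@nat_of_ord n)); rewrite /pL !val_ins; lia.
  move=> j hj; rewrite /w /Pat /pL val_ins; last by lia.
  by rewrite ifT //; lia.
pose pR := fun j : nat => insubd i0 (kstar.-1 + j)%N.
pose NR := (n - kstar).+1.
pose fR := fun x => - lq P0 P1 eps x.
have villeR : \sum_y Wt w y * (Ev fR pR NR alpha y)%:R <= rh ^+ alpha.
  apply: ville => //.
    move=> j k hj hk2 /(congr1 (@nat_of_ord n)); rewrite /pR !val_ins; lia.
  move=> j hj; rewrite /w /Pat /pR val_ins; last by lia.
  rewrite ifF; last by lia.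
  by rewrite /rh -(rho_alt x0 hP0pos hP1pos hP0sum hP1sum heps).
have incl y : bad y -> Ev fL pL NL alpha y || Ev fR pR NR alpha y.
  have [/andP[hk1 hk2] hmax] := hkhat y.
  move: (hmax kstar); rewrite !hcus => hmx.
  have {}hmx : cus (F y) kstar <= cus (F y) (khat y) by apply: hmx; lia.
  move=> /orP[hL|hR]; apply/orP; [left|right]; apply/hasP.
    exists (kstar - khat y)%N; first by rewrite mem_iota; lia.
    apply/andP; split; first by lia.
    have := cusL i0 (F y) (b := kstar) (m := (kstar - khat y)%N).
    have -> : (kstar - (kstar - khat y))%N = khat y by lia.
    move=> /(_ ltac:(lia) ltac:(lia)) e.
    suff -> : Ssum fL pL (kstar - khat y)%N y = cus (F y) (khat y) - cus (F y) kstar by lra.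
    by rewrite e.
  exists (khat y - kstar)%N; first by rewrite mem_iota; lia.
  apply/andP; split; first by lia.
  have := cusR i0 (F y) (b := kstar) (m := (khat y - kstar)%N).
  have -> : (kstar + (khat y - kstar))%N = khat y by lia.
  move=> /(_ ltac:(lia) ltac:(lia)) e.
  rewrite /Ssum /fR sumrN -[X in - X]/(\sum_(j < _) F y (pR j)) -e; lra.
have hsum : \sum_(y | bad y) Wt w y <= rh ^+ alpha + rh ^+ alpha.
  apply: le_trans (lerD villeL villeR); rewrite -big_split /= big_mkcond.
  apply: ler_sum => y _; have W0 := Wt_ge0 w_ge0 y.
  case: ifP => hb.
    have := incl y hb.
    case: (Ev fL pL NL alpha y); case: (Ev fR pR NR alpha y) => //= _; rewrite ?mulr1 ?mulr0; lra.
  by apply: addr_ge0; apply: mulr_ge0 => //; apply: ler0n.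
have hC : 1 - C_r eps P0 P1 / 2 = 1 - TVQ P0 P1 eps ^+ 2.
  rewrite (TVQ_eq x0 hP0sum hP1sum heps) /C_r /rr; field.
  by apply: lt0r_neq0; apply: (D_gt0 x0 heps).
have rs := rho_sq x0 hP0pos hP1pos hP0sum hP1sum heps.
rewrite -/rh -hC in rs.
have hy : 0 < 1 - C_r eps P0 P1 / 2.
  by apply: lt_le_trans rs; rewrite exprn_gt0.
have hB : rh ^+ alpha <= (1 - C_r eps P0 P1 / 2) `^ (alpha%:R / 2).
  apply: (@le_trans _ _ ((rh ^+ 2) `^ (alpha%:R / 2))).
    rewrite -(powR_mulrn 2 (ltW rh0)) -powRrM.
    have -> : 2%:R * (alpha%:R / 2) = alpha%:R :> R by field.
    by rewrite (powR_mulrn alpha (ltW rh0)).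
  apply: ge0_ler_powR => //.
  - by apply: divr_ge0.
  - by rewrite nnegrE sqr_ge0.
  - by rewrite nnegrE ltW.
rewrite err_eq /beta_bound /=.
case: (posnP (n.-1 %/ alpha)) => hM.
  have -> : \sum_(y | bad y) Wt w y = 0.
    apply: big_pred0 => y; apply/negbTE; rewrite /bad.
    have := hkhat y => -[/andP[h1 h2] _].
    have : (n.-1 < alpha)%N.
      rewrite ltnNge; apply/negP => h; have := leq_div2r alpha h; rewrite hM divnn.
      have -> : (0 < alpha)%N by lia.
      by [].
    lia.
  rewrite hM expr0 subrr mulr0 mul0r; apply: mulr_ge0 => //.
  by rewrite le_min lexx powR_ge0.
rewrite min_r; last first.
  apply: BleA => //; lia.
lra.
Qed.
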